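(* Let $\mathcal{H}$ be a finite-dimensional Hilbert space and let $\mathscr{N}:\mathcal{H}\to(-\infty,\infty]$ be feasible. Then $\mathscr{N}^{**}$ is feasible.
   Context: $\mathcal{H}$ is regarded as a real inner product space (if complex, with inner product $\mathrm{Re}\langle\cdot,\cdot\rangle$). A functional $\mathscr{N}:\mathcal{H}\to(-\infty,\infty]$ is proper if it is not identically $\infty$. It is called feasible if it is lower semi-continuous, proper, bounded below, and satisfies $\lim_{\|x\|\to\infty}\mathscr{N}(x)/\|x\|=\infty$. The Fenchel conjugate is $\mathscr{N}^*(y)=\sup_x \langle x,y\rangle-\mathscr{N}(x)$, and $\mathscr{N}^{**}=(\mathscr{N}^* )^*$ (the lower semi-continuous convex envelope of $\mathscr{N}$). *)

(* Defs.v *)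
From HB Require Import structures.
From mathcomp Require Import all_boot all_order all_algebra.
From mathcomp Require Import classical_sets boolp reals constructive_ereal ereal.
Set Implicit Arguments. Unset Strict Implicit. Unset Printing Implicit Defensive.
Import Order.TTheory GRing.Theory Num.Theory.
Local Open Scope ring_scope.
Local Open Scope classical_set_scope.

Definition is_inner_product (R : realType) (V : lmodType R) (ip : V -> V -> R) : Prop :=
  [/\ (forall x y, ip x y = ip y x),
      (forall (a : R) x y z, ip (a *: x + y) z = a * ip x z + ip y z)
    & (forall x, x != 0 -> 0 < ip x x)].

Definition ipnorm (R : realType) (V : lmodType R) (ip : V -> V -> R) (x : V) : R :=
  Num.sqrt (ip x x).

Definition ip_lsc (R : realType) (V : lmodType R) (ip : V -> V -> R)
    (N : V -> \bar R) : Prop :=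
  forall x (t : \bar R), (t < N x)%E ->
    exists2 e : R, 0 < e & forall y, ipnorm ip (y - x) < e -> (t < N y)%E.

Definition feasible (R : realType) (V : lmodType R) (ip : V -> V -> R)
    (N : V -> \bar R) : Prop :=
  [/\ (forall x, N x != -oo%E),
      ip_lsc ip N,
      (exists x, N x != +oo%E),
      (exists b : R, forall x, (b%:E <= N x)%E)
    & (forall M : R, exists r : R, forall x, r < ipnorm ip x ->
          (M%:E <= N x * ((ipnorm ip x)^-1)%:E)%E)].

Definition fconj (R : realType) (V : lmodType R) (ip : V -> V -> R)
    (N : V -> \bar R) : V -> \bar R :=
  fun y => ereal_sup [set ((ip x y)%:E - N x)%E | x in [set: V]].

(* Main.v *)
Require Import Defs.
From mathcomp Require Import all_boot all_order all_algebra.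
From mathcomp Require Import classical_sets boolp reals constructive_ereal ereal.
From mathcomp Require Import ring lra.
Import Order.TTheory GRing.Theory Num.Theory.
Local Open Scope ring_scope.
Local Open Scope classical_set_scope.
Set Implicit Arguments. Unset Strict Implicit. Unset Printing Implicit Defensive.

Section IP.
Variables (R : realType) (V : lmodType R) (ip : V -> V -> R).
Hypothesis hip : is_inner_product ip.

Lemma ip_sym x y : ip x y = ip y x.
Proof. by case: hip. Qed.
Lemma ip_lin a x y z : ip (a *: x + y) z = a * ip x z + ip y z.
Proof. by case: hip. Qed.
Lemma ip0l z : ip 0 z = 0.
Proof.
have := ip_lin 1 0 0 z; rewrite scaler0 addr0 mul1r => h.
by apply: (addrI (ip 0 z)); rewrite addr0 -h.
Qed.
Lemma ipDl x y z : ip (x + y) z = ip x z + ip y z.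
Proof. by rewrite -[x in LHS]scale1r ip_lin mul1r. Qed.
Lemma ipZl a x z : ip (a *: x) z = a * ip x z.
Proof. by rewrite -[_ *: _]addr0 ip_lin ip0l addr0. Qed.
Lemma ipNl x z : ip (- x) z = - ip x z.
Proof. by rewrite -scaleN1r ipZl mulN1r. Qed.
Lemma ipZr a x z : ip z (a *: x) = a * ip z x.
Proof. by rewrite ip_sym ipZl ip_sym. Qed.
Lemma ipDr x y z : ip z (x + y) = ip z x + ip z y.
Proof. by rewrite ip_sym ipDl !(ip_sym z). Qed.
Lemma ipNr x z : ip z (- x) = - ip z x.
Proof. by rewrite ip_sym ipNl ip_sym. Qed.
Lemma ip_ge0 x : 0 <= ip x x.
Proof. case: hip => _ _ h; have [->|/h/ltW//] := eqVneq x 0; by rewrite ip0l. Qed.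
Lemma ip_eq0 x : ip x x = 0 -> x = 0.
Proof. case: hip => _ _ h; have [//|/h] := eqVneq x 0; by move=> /gt_eqF/eqP. Qed.

Lemma ipnorm_ge0 x : 0 <= ipnorm ip x.
Proof. exact: sqrtr_ge0. Qed.
Lemma ipnorm_sq x : ipnorm ip x ^+ 2 = ip x x.
Proof. by rewrite sqr_sqrtr // ip_ge0. Qed.
Lemma ipnormZ a x : ipnorm ip (a *: x) = `|a| * ipnorm ip x.
Proof.
by rewrite /ipnorm ipZl ipZr mulrA -expr2 sqrtrM ?sqr_ge0 // sqrtr_sqr.
Qed.
Lemma ipnormN x : ipnorm ip (- x) = ipnorm ip x.
Proof. by rewrite -scaleN1r ipnormZ normrN normr1 mul1r. Qed.

Lemma CS z y : ip z y <= ipnorm ip z * ipnorm ip y.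
Proof.
have [->|zn0] := eqVneq z 0; first by rewrite ip0l mulr_ge0 ?ipnorm_ge0.
have [->|yn0] := eqVneq y 0; first by rewrite ip_sym ip0l mulr_ge0 ?ipnorm_ge0.
set a := ipnorm ip z; set b := ipnorm ip y.
have a0 : 0 < a.
  rewrite sqrtr_gt0 lt_neqAle ip_ge0 andbT eq_sym; apply/eqP => /ip_eq0 h.
  by rewrite h eqxx in zn0.
have b0 : 0 < b.
  rewrite sqrtr_gt0 lt_neqAle ip_ge0 andbT eq_sym; apply/eqP => /ip_eq0 h.
  by rewrite h eqxx in yn0.
have := ip_ge0 ((b / a) *: z - y).
rewrite ipDl ipZl ipNl !ipDr !ipZr !ipNr (ip_sym y z) -!ipnorm_sq -/a -/b.
set c := ip z y => h.
have e : b / a * (b / a * a ^+ 2 - c) - (b / a * c - b ^+ 2) = 2 * b * (a * b - c) / a.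
  by field; rewrite gt_eqF.
rewrite e in h.
rewrite -subr_ge0; move: h; rewrite pmulr_lge0 ?invr_gt0 // pmulr_rge0 //.
by rewrite mulr_gt0.
Qed.

Lemma CSabs z y : `|ip z y| <= ipnorm ip z * ipnorm ip y.
Proof.
rewrite ler_norml CS andbT lerNl -ipNl -(ipnormN z) CS //.
Qed.
End IP.

Lemma fconj_ge (R : realType) (V : lmodType R) (ip : V -> V -> R) (F : V -> \bar R) x y :
  ((ip x y)%:E - F x <= fconj ip F y)%E.
Proof. by apply: ereal_sup_ge; exists ((ip x y)%:E - F x)%E => //; exists x. Qed.

Theorem proposition2 (R : realType) (V : vectType R) (ip : V -> V -> R)
    (hip : is_inner_product ip) (N : V -> \bar R) :
  feasible ip N -> feasible ip (fconj ip (fconj ip N)).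
Proof.
move=> [Nnoo Nlsc [x0 Nx0] [b Nb] Nsc].
set Ns := fconj ip N; set Nss := fconj ip Ns.
have Ns0 : (Ns 0%R <= (-b)%:E)%E.
  apply: ge_ereal_sup => _ [x _ <-].
  rewrite ip_sym // ip0l //; have := Nb x; have := Nnoo x.
  case: (N x) => [n||] //= _; last by rewrite leNye.
  by rewrite -EFinD !lee_fin => h; lra.
have Nss_b x : (b%:E <= Nss x)%E.
  apply: (le_trans _ (fconj_ge ip Ns 0 x)); rewrite ip0l //; move: Ns0.
  case: (Ns 0%R) => [s||] //=; last by rewrite leey.
  by rewrite -EFinB !lee_fin => h; lra.
have Ns_noo y : Ns y != -oo%E.
  have := fconj_ge ip N x0 y; rewrite -/Ns; move: Nx0 (Nnoo x0).
  by case: (N x0) => [n||] //= _ _; case: (Ns y).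
have young x y : ((ip y x)%:E - Ns y <= N x)%E.
  have := fconj_ge ip N x y; rewrite -/Ns (ip_sym hip x y); move: (Nnoo x) (Ns_noo y).
  case: (N x) => [n||] //= _; case: (Ns y) => [s||] //= _; rewrite ?leey ?leNye //.
  by rewrite -!EFinB !lee_fin => h; lra.
split.
- by move=> x; have := Nss_b x; case: (Nss x).
- move=> x t /ereal_sup_gt [_ [y _ <-]] ht.
  case: t ht => [t0||] ht; last 2 first.
  + by move: ht; rewrite ltNge leey.
  + by exists 1 => // y' _; apply: lt_le_trans (ltNyr b) (Nss_b y').
  move: ht (Ns_noo y); case E: (Ns y) => [s||] //= ht _.
  rewrite -EFinD lte_fin in ht.
  set n := ipnorm ip y; set d := ip y x - s - t0.
  have n0 : 0 <= n by apply: ipnorm_ge0.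
  have n1 : 0 < n + 1 by apply: ltr_wpDl.
  have d0 : 0 < d by rewrite /d; lra.
  have he : d / (n + 1) * (n + 1) = d by field; rewrite gt_eqF.
  exists (d / (n + 1)); first by rewrite divr_gt0.
  move=> x' hx'; apply: (lt_le_trans _ (fconj_ge ip Ns y x')).
  rewrite E -EFinB lte_fin.
  have e1 : ip y x' = ip y x + ip y (x' - x) by rewrite -ipDr // addrC subrK.
  have := CSabs hip y (x' - x); rewrite -/n ler_norml => /andP[h1 h2].
  have m0 := ipnorm_ge0 ip (x' - x).
  have dd : d = ip y x - s - t0 by [].
  move: hx' h1 h2 m0 he; set m := ipnorm ip (x' - x); set e := d / (n + 1) => hm h1 h2 m0 he.
  have e0 : 0 < e by rewrite divr_gt0.
  have nm : n * m <= n * e by rewrite ler_wpM2l // ltW.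
  rewrite e1; clearbody d n m e; subst d; nra.
- exists x0; have : (Nss x0 <= N x0)%E.
    by apply: ge_ereal_sup => _ [y _ <-]; exact: young.
  by move: Nx0; case: (N x0) => [n||] //; case: (Nss x0).
- by exists b.
- move=> M; set M' := `|M| + 1.
  have M'0 : 0 < M' by rewrite ltr_wpDl.
  have [r hr] := Nsc M'.
  set C := M' * `|r| + `|b|.
  have C0 : 0 <= C by rewrite addr_ge0 // mulr_ge0 // ltW.
  have lowN z : ((M' * ipnorm ip z - C)%:E <= N z)%E.
    have z0 := ipnorm_ge0 ip z.
    have [zr|zr] := lerP (ipnorm ip z) `|r|.
      apply: le_trans (Nb z); rewrite lee_fin.
      have : M' * ipnorm ip z <= M' * `|r| by rewrite ler_wpM2l // ltW.
      have := ler_norm (- b); rewrite normrN /C; lra.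
    have zpos : 0 < ipnorm ip z by apply: le_lt_trans zr.
    have := hr z (le_lt_trans (ler_norm r) zr); move: (Nnoo z).
    case: (N z) => [n||] //= _; last by rewrite leey.
    rewrite -EFinM !lee_fin ler_pdivlMr // => h; lra.
  exists C => x hx.
  have xpos : 0 < ipnorm ip x by apply: le_lt_trans hx.
  set y := (M' / ipnorm ip x) *: x.
  have ky : 0 <= M' / ipnorm ip x by rewrite divr_ge0 // ltW.
  have Nsy : (Ns y <= C%:E)%E.
    apply: ge_ereal_sup => _ [z _ <-].
    have h := CS hip z y.
    rewrite ipnormZ // ger0_norm // divfK ?gt_eqF // in h.
    have := lowN z; move: (Nnoo z).
    case: (N z) => [n||] //= _; last by rewrite leNye.
    rewrite -EFinB !lee_fin => h2; nra.
  have low : ((M' * ipnorm ip x - C)%:E <= Nss x)%E.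
    apply: le_trans (fconj_ge ip Ns y x).
    rewrite /y ipZl // -ipnorm_sq // expr2 mulrA divfK ?gt_eqF //.
    move: Nsy (Ns_noo y); case: (Ns y) => [s||] //= hs _.
    by rewrite -EFinB lee_fin; rewrite lee_fin in hs; lra.
  apply: le_trans (lee_wpmul2r _ low); last by rewrite lee_fin invr_ge0 ltW.
  rewrite -EFinM lee_fin.
  have q : C / ipnorm ip x <= 1 by rewrite ler_pdivrMr // mul1r ltW.
  have -> : (M' * ipnorm ip x - C) / ipnorm ip x = M' - C / ipnorm ip x.
    by field; rewrite gt_eqF.
  have := ler_norm M; rewrite /M'; lra.
Qed.
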